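(* Run xOrder with the criterion $F=\widehat G_\infty$ (the $\lambda\to\infty$ limit of the objective). Then its output $o^*=o^*(n^a,n^b)$ satisfies $$\Delta\mathrm{xAUC}(o^* )\le\max\Big(\frac{1}{n_1^a},\frac{1}{n_1^b}\Big).$$
   Context: Setting: two disjoint finite groups $a$, $b$ of samples, each sample $u$ having label $Y_u\in\{0,1\}$; $n^a,n^b$ group sizes, $n_1^a,n_0^a$ numbers of label-1/label-0 samples in $a$ (similarly for $b$), all $\ge1$, $k_{a,b}=n_1^an_0^b$, $k_{b,a}=n_0^an_1^b$. Fixed within-group rankings $\mathrm{p}^a=(\mathrm{p}^{a(1)},\dots,\mathrm{p}^{a(n^a)})$, $\mathrm{p}^b=(\mathrm{p}^{b(1)},\dots,\mathrm{p}^{b(n^b)})$. A cross-group ordering is a ranked list of all samples of $a\cup b$ whose restrictions to $a,b$ are $\mathrm{p}^a,\mathrm{p}^b$; $\mathrm{xAUC}_o(a,b)$ is the fraction of pairs (label-1 sample of $a$, label-0 sample of $b$) in which the first is ranked above the second, $\mathrm{xAUC}_o(b,a)$ symmetrically, $\Delta\mathrm{xAUC}(o)=|\mathrm{xAUC}_o(a,b)-\mathrm{xAUC}_o(b,a)|$. Partial orderings: for $0\le i\le n^a$, $0\le j\le n^b$, an $(i,j)$-partial ordering is a ranked list of $\mathrm{p}^{a(1)},\dots,\mathrm{p}^{a(i)},\mathrm{p}^{b(1)},\dots,\mathrm{p}^{b(j)}$ preserving within-group orders. $H_{ab}(o)$ is the number of pairs $(k,h)$ with $1\le k\le i$, $1\le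 h\le n^b$, $Y_{\mathrm{p}^{a(k)}}=1$, $Y_{\mathrm{p}^{b(h)}}=0$, and either $h>j$ or ($h\le j$ and $\mathrm{p}^{a(k)}$ precedes $\mathrm{p}^{b(h)}$ in $o$); $H_{ba}(o)$ is the number of pairs $(h,k)$ with $1\le h\le j$, $1\le k\le n^a$, $Y_{\mathrm{p}^{b(h)}}=1$, $Y_{\mathrm{p}^{a(k)}}=0$, and either $k>i$ or ($k\le i$ and $\mathrm{p}^{b(h)}$ precedes $\mathrm{p}^{a(k)}$ in $o$). $\widehat G_\infty(o)=-\big|H_{ab}(o)/k_{a,b}-H_{ba}(o)/k_{b,a}\big|$; for a full ordering ($i=n^a,j=n^b$) this equals $-\Delta\mathrm{xAUC}(o)$. xOrder with criterion $F$: $o^*(i,0)=(\mathrm{p}^{a(1)},\dots,\mathrm{p}^{a(i)})$, $o^*(0,j)=(\mathrm{p}^{b(1)},\dots,\mathrm{p}^{b(j)})$; for $i=1,\dots,n^a$ and $j=1,\dots,n^b$, with $c_a=o^*(i-1,j)\oplus\mathrm{p}^{a(i)}$ and $c_b=o^*(i,j-1)\oplus\mathrm{p}^{b(j)}$ ($\oplus$ = append at the bottom), set $o^*(i,j)=c_a$ if $F(c_a)>F(c_b)$ and $o^*(i,j)=c_b$ otherwise. Output $o^*(n^a,n^b)$. *)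

(* Defs.v *)
From mathcomp Require Import all_boot all_order all_algebra.
Set Implicit Arguments. Unset Strict Implicit. Unset Printing Implicit Defensive.
Import Order.TTheory GRing.Theory Num.Theory.
Local Open Scope ring_scope.

(* Samples have type T (an eqType) with labels Y : T -> bool (true = label 1).
   A ranking/ordering is a list of samples, first element = ranked highest;
   appending at the bottom = rcons.  pa, pb are the fixed within-group rankings
   p^a, p^b (0-indexed: p^{a(k+1)} = nth x0 pa k); x0 is an irrelevant default
   element used only for out-of-range nth (never reached). *)

Section XOrder.
Variables (T : eqType) (x0 : T) (Y : T -> bool) (pa pb : seq T).

Definition precedes (o : seq T) (x y : T) : bool := (index x o < index y o)%N.

Definition k_ab : nat := (count Y pa * count (predC Y) pb)%N.
Definition k_ba : nat := (count (predC Y) pa * count Y pb)%N.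

Definition H_ab (i j : nat) (o : seq T) : nat :=
  (\sum_(k < i) \sum_(h < size pb)
     ([&& Y (nth x0 pa k), ~~ Y (nth x0 pb h)
        & (j <= h)%N || precedes o (nth x0 pa k) (nth x0 pb h)] : nat))%N.

Definition H_ba (i j : nat) (o : seq T) : nat :=
  (\sum_(h < j) \sum_(k < size pa)
     ([&& Y (nth x0 pb h), ~~ Y (nth x0 pa k)
        & (i <= k)%N || precedes o (nth x0 pb h) (nth x0 pa k)] : nat))%N.

Definition Ghat_inf (i j : nat) (o : seq T) : rat :=
  - `| (H_ab i j o)%:R / k_ab%:R - (H_ba i j o)%:R / k_ba%:R |.

(* xOrder with criterion F (F i j o evaluates an (i,j)-partial ordering o):
   xo i j = o^*(i,j). *)
Fixpoint xo (F : nat -> nat -> seq T -> rat) (i : nat) : nat -> seq T :=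
  match i with
  | 0 => fun j => take j pb
  | i'.+1 => fix xoj (j : nat) : seq T :=
      match j with
      | 0 => take i'.+1 pa
      | j'.+1 =>
          let ca := rcons (xo F i' j'.+1) (nth x0 pa i') in
          let cb := rcons (xoj j') (nth x0 pb j') in
          if F i'.+1 j'.+1 cb < F i'.+1 j'.+1 ca then ca else cb
      end
  end.

Definition xOrder (F : nat -> nat -> seq T -> rat) : seq T :=
  xo F (size pa) (size pb).

Definition xAUC (o A B : seq T) : rat :=
  (\sum_(x <- A) \sum_(y <- B) ([&& Y x, ~~ Y y & precedes o x y] : nat))%N%:R
  / (count Y A * count (predC Y) B)%N%:R.

Definition DeltaxAUC (o : seq T) : rat := `| xAUC o pa pb - xAUC o pb pa |.

End XOrder.

(* Main.v *)
Require Import Defs.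
From mathcomp Require Import all_boot all_order all_algebra.
From mathcomp Require Import ring lra zify.
Import Order.TTheory GRing.Theory Num.Theory.
Local Open Scope ring_scope.

Section Abs.
Variables (na nb : nat) (f al be : nat -> nat -> rat) (M : rat).
Hypothesis H00 : f 0 0 = 0.
Hypothesis Hi0 : forall i, (i < na)%N -> f i.+1 0 = f i 0 + al i 0.
Hypothesis H0j : forall j, (j < nb)%N -> f 0 j.+1 = f 0 j - be 0 j.
Hypothesis Hij : forall i j, (i < na)%N -> (j < nb)%N ->
  f i.+1 j.+1 = if `|f i j.+1 + al i j.+1| < `|f i.+1 j - be i.+1 j|
                then f i j.+1 + al i j.+1 else f i.+1 j - be i.+1 j.
Hypothesis Hal : forall i j, (i < na)%N -> (j <= nb)%N -> 0 <= al i j <= M.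
Hypothesis Hbe : forall i j, (i <= na)%N -> (j < nb)%N -> 0 <= be i j <= M.
Hypothesis Hal0 : forall i, (i < na)%N -> al i nb = 0.
Hypothesis Hbe0 : forall j, (j < nb)%N -> be na j = 0.

Definition P1 i j := (i < na)%N -> (j <= nb)%N -> f i j <= 0 -> 0 < f i.+1 j -> f i.+1 j <= M.
Definition P2 i j := (i <= na)%N -> (j < nb)%N -> 0 <= f i j -> f i j.+1 < 0 -> - M <= f i j.+1.

Lemma P12 n : forall i j, (i + j < n)%N -> P1 i j /\ P2 i j.
Proof.
elim: n => [//|n IH] i j hn; split.
- move=> hi hj fij fS.
  case: j hn hj fij fS => [|j] hn hj fij fS.
    move: fS; rewrite Hi0 // => fS; have := Hal _ _ hi hj; lra.
  have [ha1 ha2] := andP (Hal _ _ hi hj).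
  have /andP[hb1 hb2] : 0 <= be i.+1 j <= M by apply: Hbe; lia.
  move: fS; rewrite Hij //; case: ifP => hc fS.
    lra.
  move/negbT: hc; rewrite -leNgt => hc.
  rewrite ger0_norm in hc; last lra.
  case: (lerP 0 (f i j.+1 + al i j.+1)) => hca.
    rewrite ger0_norm in hc => //; lra.
  rewrite ltr0_norm in hc => //.
  case: (lerP (f i j) 0) => hx.
    have [h1 _] := IH i j ltac:(lia).
    have := h1 hi ltac:(lia) hx ltac:(lra); lra.
  have [_ h2] := IH i j ltac:(lia).
  have := h2 ltac:(lia) hj ltac:(lra) ltac:(lra); lra.
- move=> hi hj fij fS.
  case: i hn hi fij fS => [|i] hn hi fij fS.
    move: fS; rewrite H0j // => fS; have := Hbe _ _ hi hj; lra.
  have [hb1 hb2] := andP (Hbe _ _ hi hj).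
  have /andP[ha1 ha2] : 0 <= al i j.+1 <= M by apply: Hal; lia.
  move: fS; rewrite Hij //; case: ifP => hc fS.
    2: lra.
  rewrite ltr0_norm in hc; last lra.
  case: (lerP (f i.+1 j - be i.+1 j) 0) => hcb.
    move: hc; rewrite ler0_norm //; lra.
  rewrite gtr0_norm in hc => //.
  case: (lerP 0 (f i j)) => hx.
    have [_ h2] := IH i j ltac:(lia).
    have := h2 ltac:(lia) hj hx ltac:(lra); lra.
  have [h1 _] := IH i j ltac:(lia).
  have := h1 hi ltac:(lia) ltac:(lra) ltac:(lra); lra.
Qed.

Hypothesis hna : (0 < na)%N.
Hypothesis hnb : (0 < nb)%N.

Lemma f0j j : (j <= nb)%N -> f 0 j <= 0.
Proof.
elim: j => [|j IH] hj; first by rewrite H00.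
rewrite H0j //; have := IH (ltnW hj); have := Hbe 0 j (leq0n na) hj; lra.
Qed.

Lemma fi0 i : (i <= na)%N -> 0 <= f i 0.
Proof.
elim: i => [|i IH] hi; first by rewrite H00.
rewrite Hi0 //; have := IH (ltnW hi); have := Hal i 0 hi (leq0n nb); lra.
Qed.

Lemma Qcol i : (i <= na)%N -> 0 < f i nb -> f i nb <= M.
Proof.
elim: i => [|i IH] hi hf.
  have := f0j nb (leqnn nb); lra.
case: (lerP (f i nb) 0) => hx.
  have [h1 _] := P12 (i+nb).+1 i nb (ltnSn _).
  exact: h1.
have hm := IH (ltnW hi) hx.
have [nb' enb] : exists nb', nb = nb'.+1 by exists nb.-1; lia.
move: hf; rewrite {1 2}enb Hij; last 2 first; [done | lia |].
rewrite -enb Hal0 // addr0; case: ifP => hc hf; first lra.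
move/negbT: hc; rewrite -leNgt (gtr0_norm hx) (gtr0_norm hf); lra.
Qed.

Lemma Rrow j : (j <= nb)%N -> f na j < 0 -> - M <= f na j.
Proof.
elim: j => [|j IH] hj hf.
  have := fi0 na (leqnn na); lra.
case: (lerP 0 (f na j)) => hx.
  have [_ h2] := P12 (na+j).+1 na j (ltnSn _).
  exact: h2.
have hm := IH (ltnW hj) hx.
have [na' ena] : exists na', na = na'.+1 by exists na.-1; lia.
move: hf; rewrite {1 2}ena Hij; last 2 first; [lia | done |].
rewrite -ena Hbe0 // subr0; case: ifP => hc hf; last lra.
move: hc; rewrite (ltr0_norm hx) (ltr0_norm hf); lra.
Qed.

Lemma abs_main : `|f na nb| <= M.
Proof.
case: (ltrgtP (f na nb) 0) => h.
- rewrite ltr0_norm //; have := Rrow nb (leqnn nb) h; lra.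
- rewrite gtr0_norm //; exact: Qcol na (leqnn na) h.
- rewrite h normr0; have := Hal 0 0 hna (leq0n _); lra.
Qed.
End Abs.

Section Conc.
Variables (T : eqType) (x0 : T) (Y : T -> bool).

Lemma prec_keep (o : seq T) x y z : x \in o -> y \in o ->
  precedes (rcons o z) x y = precedes o x y.
Proof. by move=> hx hy; rewrite /precedes -cats1 !index_cat hx hy. Qed.

Lemma prec_last1 (o : seq T) x z : x \in o -> z \notin o ->
  precedes (rcons o z) x z.
Proof.
move=> hx hz; rewrite /precedes -cats1 !index_cat hx (negbTE hz) /= eqxx addn0.
by rewrite index_mem.
Qed.

Lemma prec_last2 (o : seq T) x z : x \in o -> z \notin o ->
  precedes (rcons o z) z x = false.
Proof.
move=> hx hz; rewrite /precedes -cats1 !index_cat hx (negbTE hz) /= eqxx addn0.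
by apply/negbTE; rewrite -leqNgt; apply: ltnW; rewrite index_mem.
Qed.

Lemma HabA (p q o : seq T) i j :
  (forall k, (k < i)%N -> nth x0 p k \in o) ->
  (forall h, (h < j)%N -> nth x0 q h \in o) -> nth x0 p i \notin o ->
  H_ab x0 Y p q i.+1 j (rcons o (nth x0 p i)) =
  (H_ab x0 Y p q i j o +
   \sum_(h < size q) ([&& Y (nth x0 p i), ~~ Y (nth x0 q h) & (j <= h)%N] : nat))%N.
Proof.
move=> hp hq hn; rewrite /H_ab big_ord_recr /=; congr (_ + _)%N.
  apply: eq_bigr => k _; apply: eq_bigr => h _.
  case: (leqP j h) => jh; first by [].
  by rewrite /= prec_keep //; [apply: hp | apply: hq].
apply: eq_bigr => h _.
case: (leqP j h) => jh; first by rewrite /=.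
by rewrite /= prec_last2 //; apply: hq.
Qed.

Lemma HabB (p q o : seq T) i j :
  (forall k, (k < i)%N -> nth x0 p k \in o) ->
  (forall h, (h < j)%N -> nth x0 q h \in o) -> nth x0 q j \notin o ->
  H_ab x0 Y p q i j.+1 (rcons o (nth x0 q j)) = H_ab x0 Y p q i j o.
Proof.
move=> hp hq hn; rewrite /H_ab; apply: eq_bigr => k _; apply: eq_bigr => h _.
case: (ltngtP h j) => hj /=.
- by rewrite prec_keep //; [apply: hp | apply: hq].
- by [].
- by rewrite hj prec_last1 //; apply: hp.
Qed.

Lemma sum_count (s : seq T) (P : pred T) : (\sum_(x <- s) (P x : nat))%N = count P s.
Proof. by elim: s => [|x s IH]; rewrite ?big_nil ?big_cons ?IH. Qed.

Lemma sum_nth_count (s : seq T) (P : pred T) :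
  (\sum_(h < size s) (P (nth x0 s h) : nat))%N = count P s.
Proof. by rewrite -sum_count (big_nth x0) big_mkord. Qed.

Lemma xAUC_H (o p q : seq T) : xAUC Y o p q =
  (H_ab x0 Y p q (size p) (size q) o)%:R / (count Y p * count (predC Y) q)%N%:R.
Proof.
rewrite /xAUC /H_ab; congr (_%:R / _); rewrite (big_nth x0) big_mkord.
apply: eq_bigr => k _; rewrite (big_nth x0) big_mkord.
by apply: eq_bigr => h _; rewrite leqNgt ltn_ord.
Qed.

Variables (pa pb : seq T).
Hypothesis upa : uniq pa.
Hypothesis upb : uniq pb.
Hypothesis disj : forall x, x \in pa -> x \notin pb.

Let F := Ghat_inf x0 Y pa pb.

Lemma xoS i j : xo x0 pa pb F i.+1 j.+1 =
  if F i.+1 j.+1 (rcons (xo x0 pa pb F i.+1 j) (nth x0 pb j)) <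
     F i.+1 j.+1 (rcons (xo x0 pa pb F i j.+1) (nth x0 pa i))
  then rcons (xo x0 pa pb F i j.+1) (nth x0 pa i)
  else rcons (xo x0 pa pb F i.+1 j) (nth x0 pb j).
Proof. by []. Qed.

Lemma xo_i0 i : xo x0 pa pb F i 0 = take i pa.
Proof. by case: i => [|i] //=; rewrite !take0. Qed.

Lemma xo_0j j : xo x0 pa pb F 0 j = take j pb.
Proof. by []. Qed.

Lemma xo_mem i j x : (i <= size pa)%N -> (j <= size pb)%N ->
  (x \in xo x0 pa pb F i j) = (x \in take i pa) || (x \in take j pb).
Proof.
elim: i j => [|i IHi] j hi hj; first by rewrite xo_0j take0.
elim: j hj => [|j IHj] hj; first by rewrite xo_i0 take0 orbF.
rewrite xoS; case: ifP => _; rewrite mem_rcons in_cons.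
  rewrite IHi ?(ltnW hi) // (take_nth x0 hi) mem_rcons in_cons.
  by rewrite orbA.
rewrite IHj ?(ltnW hj) // (take_nth x0 hj) mem_rcons in_cons.
by rewrite orbCA.
Qed.

Lemma mem_take_nth (s : seq T) k i : (k < i)%N -> (i <= size s)%N ->
  nth x0 s k \in take i s.
Proof.
move=> hk hi; rewrite -(nth_take x0 hk s) mem_nth // size_takel //.
Qed.

Lemma notin_take (s : seq T) i : uniq s -> (i < size s)%N -> nth x0 s i \notin take i s.
Proof.
move=> us hi; have := take_uniq i.+1 us.
by rewrite (take_nth x0 hi) rcons_uniq => /andP[].
Qed.

Lemma xo_a i j k : (i <= size pa)%N -> (j <= size pb)%N -> (k < i)%N ->
  nth x0 pa k \in xo x0 pa pb F i j.
Proof. by move=> hi hj hk; rewrite xo_mem // mem_take_nth. Qed.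

Lemma xo_b i j h : (i <= size pa)%N -> (j <= size pb)%N -> (h < j)%N ->
  nth x0 pb h \in xo x0 pa pb F i j.
Proof. by move=> hi hj hk; rewrite xo_mem // mem_take_nth ?orbT. Qed.

Lemma xo_na i j : (i < size pa)%N -> (j <= size pb)%N ->
  nth x0 pa i \notin xo x0 pa pb F i j.
Proof.
move=> hi hj; rewrite xo_mem ?(ltnW hi) // negb_or notin_take //=.
apply/negP => /mem_take; apply/negP/disj; exact: mem_nth.
Qed.

Lemma xo_nb i j : (i <= size pa)%N -> (j < size pb)%N ->
  nth x0 pb j \notin xo x0 pa pb F i j.
Proof.
move=> hi hj; rewrite xo_mem ?(ltnW hj) // negb_or notin_take // andbT.
apply/negP => /mem_take hx; have := disj _ hx; by rewrite mem_nth.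
Qed.

Definition D i j o : rat :=
  (H_ab x0 Y pa pb i j o)%:R / (k_ab Y pa pb)%:R -
  (H_ba x0 Y pa pb i j o)%:R / (k_ba Y pa pb)%:R.

Definition al i j : rat :=
  (\sum_(h < size pb) ([&& Y (nth x0 pa i), ~~ Y (nth x0 pb h) & (j <= h)%N] : nat))%N%:R
  / (k_ab Y pa pb)%:R.

Definition be i j : rat :=
  (\sum_(k < size pa) ([&& Y (nth x0 pb j), ~~ Y (nth x0 pa k) & (i <= k)%N] : nat))%N%:R
  / (k_ba Y pa pb)%:R.

Definition f i j := D i j (xo x0 pa pb F i j).

Lemma stepA i j : (i < size pa)%N -> (j <= size pb)%N ->
  D i.+1 j (rcons (xo x0 pa pb F i j) (nth x0 pa i)) = f i j + al i j.
Proof.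
move=> hi hj; rewrite /D /f /al.
have ha := fun k => @xo_a i j k (ltnW hi) hj; have hb := fun h => @xo_b i j h (ltnW hi) hj.
have hn := @xo_na i j hi hj.
rewrite HabA //.
have -> : H_ba x0 Y pa pb i.+1 j (rcons (xo x0 pa pb F i j) (nth x0 pa i)) =
          H_ba x0 Y pa pb i j (xo x0 pa pb F i j).
  exact: (@HabB pb pa _ j i).
by rewrite natrD mulrDl addrAC.
Qed.

Lemma stepB i j : (i <= size pa)%N -> (j < size pb)%N ->
  D i j.+1 (rcons (xo x0 pa pb F i j) (nth x0 pb j)) = f i j - be i j.
Proof.
move=> hi hj; rewrite /D /f /be.
have ha := fun k => @xo_a i j k hi (ltnW hj); have hb := fun h => @xo_b i j h hi (ltnW hj).
have hn := @xo_nb i j hi hj.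
rewrite HabB //.
have -> : H_ba x0 Y pa pb i j.+1 (rcons (xo x0 pa pb F i j) (nth x0 pb j)) =
          (H_ba x0 Y pa pb i j (xo x0 pa pb F i j) +
   \sum_(k < size pa) ([&& Y (nth x0 pb j), ~~ Y (nth x0 pa k) & (i <= k)%N] : nat))%N.
  exact: (@HabA pb pa _ j i).
by rewrite natrD mulrDl opprD addrA.
Qed.

End Conc.

Section Final.
Variables (T : eqType) (x0 : T) (Y : T -> bool) (pa pb : seq T).
Hypothesis upa : uniq pa.
Hypothesis upb : uniq pb.
Hypothesis disj : forall x, x \in pa -> x \notin pb.
Hypothesis c1a : (1 <= count Y pa)%N.
Hypothesis c0a : (1 <= count (predC Y) pa)%N.
Hypothesis c1b : (1 <= count Y pb)%N.
Hypothesis c0b : (1 <= count (predC Y) pb)%N.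

Let F := Ghat_inf x0 Y pa pb.
Let ff := @f _ x0 Y pa pb.
Let al' := @al _ x0 Y pa pb.
Let be' := @be _ x0 Y pa pb.
Let M : rat := Num.max (1 / (count Y pa)%:R) (1 / (count Y pb)%:R).

Lemma F00 : ff 0 0 = 0.
Proof. by rewrite /ff /f /D /H_ab /H_ba !big_ord0 !mul0r subr0. Qed.

Lemma Fi0 i : (i < size pa)%N -> ff i.+1 0 = ff i 0 + al' i 0.
Proof.
move=> hi.
have e : xo x0 pa pb F i.+1 0 = rcons (xo x0 pa pb F i 0) (nth x0 pa i).
  by rewrite !xo_i0 (take_nth x0 hi).
by rewrite /ff /f -/F e stepA.
Qed.

Lemma F0j j : (j < size pb)%N -> ff 0 j.+1 = ff 0 j - be' 0 j.
Proof.
move=> hj.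
have e : xo x0 pa pb F 0 j.+1 = rcons (xo x0 pa pb F 0 j) (nth x0 pb j).
  by rewrite !xo_0j (take_nth x0 hj).
by rewrite /ff /f -/F e stepB.
Qed.

Lemma Fij i j : (i < size pa)%N -> (j < size pb)%N ->
  ff i.+1 j.+1 = if `|ff i j.+1 + al' i j.+1| < `|ff i.+1 j - be' i.+1 j|
                then ff i j.+1 + al' i j.+1 else ff i.+1 j - be' i.+1 j.
Proof.
move=> hi hj.
have GE : forall i j o, F i j o = - `|@D _ x0 Y pa pb i j o| by [].
rewrite /ff /f -/F xoS -/F !GE ltrN2 stepA // stepB //.
by case: ifP => _; rewrite ?stepA ?stepB.
Qed.

Lemma Fal i j : (i < size pa)%N -> (j <= size pb)%N -> 0 <= al' i j <= M.
Proof.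
move=> hi hj; rewrite /al' /al /k_ab.
set S := (\sum_(h < size pb) _)%N.
have Sle : (S <= count (predC Y) pb)%N.
  rewrite -(@sum_nth_count _ x0); apply: leq_sum => h _ /=.
  by case: (Y (nth x0 pa i)); case: (Y (nth x0 pb h)); case: (j <= h)%N.
apply/andP; split; first by rewrite divr_ge0 // ler0n.
rewrite le_max; apply/orP; left.
have hpos : 0 < (count Y pa * count (predC Y) pb)%N%:R :> rat.
  by rewrite ltr0n muln_gt0 c1a c0b.
rewrite ler_pdivrMr // natrM.
have -> : 1 / (count Y pa)%:R * ((count Y pa)%:R * (count (predC Y) pb)%:R)
          = (count (predC Y) pb)%:R :> rat.
  field; rewrite pnatr_eq0; lia.
by rewrite ler_nat.
Qed.

Lemma Fbe i j : (i <= size pa)%N -> (j < size pb)%N -> 0 <= be' i j <= M.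
Proof.
move=> hi hj; rewrite /be' /be /k_ba.
set S := (\sum_(k < size pa) _)%N.
have Sle : (S <= count (predC Y) pa)%N.
  rewrite -(@sum_nth_count _ x0); apply: leq_sum => h _ /=.
  by case: (Y (nth x0 pb j)); case: (Y (nth x0 pa h)); case: (i <= h)%N.
apply/andP; split; first by rewrite divr_ge0 // ler0n.
rewrite le_max; apply/orP; right.
have hpos : 0 < (count (predC Y) pa * count Y pb)%N%:R :> rat.
  by rewrite ltr0n muln_gt0 c1b c0a.
rewrite ler_pdivrMr // natrM.
have -> : 1 / (count Y pb)%:R * ((count (predC Y) pa)%:R * (count Y pb)%:R)
          = (count (predC Y) pa)%:R :> rat.
  field; rewrite pnatr_eq0; lia.
by rewrite ler_nat.
Qed.

Lemma Fal0 i : (i < size pa)%N -> al' i (size pb) = 0.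
Proof.
move=> _; rewrite /al' /al big1 ?mul0r // => h _.
by rewrite leqNgt ltn_ord !andbF.
Qed.

Lemma Fbe0 j : (j < size pb)%N -> be' (size pa) j = 0.
Proof.
move=> _; rewrite /be' /be big1 ?mul0r // => h _.
by rewrite leqNgt ltn_ord !andbF.
Qed.

Lemma final_bound : `|ff (size pa) (size pb)| <= M.
Proof.
apply: (@abs_main (size pa) (size pb) ff al' be' M F00 Fi0 F0j Fij Fal Fbe Fal0 Fbe0).
- by have := count_size Y pa; lia.
- by have := count_size Y pb; lia.
Qed.

Lemma Delta_eq : DeltaxAUC Y pa pb (xOrder x0 pa pb F) = `|ff (size pa) (size pb)|.
Proof.
rewrite /DeltaxAUC /xOrder !(@xAUC_H _ x0) /ff /f /D /k_ab /k_ba.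
by rewrite (mulnC (count Y pb)).
Qed.

End Final.

Theorem theorem1 (T : eqType) (x0 : T) (Y : T -> bool) (pa pb : seq T) :
  uniq pa -> uniq pb -> (forall x, x \in pa -> x \notin pb) ->
  (1 <= count Y pa)%N -> (1 <= count (predC Y) pa)%N ->
  (1 <= count Y pb)%N -> (1 <= count (predC Y) pb)%N ->
  DeltaxAUC Y pa pb (xOrder x0 pa pb (Ghat_inf x0 Y pa pb))
    <= Num.max (1 / (count Y pa)%:R) (1 / (count Y pb)%:R).
Proof.
move=> upa upb disj h1 h2 h3 h4.
rewrite Delta_eq //; exact: final_bound.
Qed.
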